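(* Let ${\cal M}$ be the set of matrix-valued functions $L(\lambda)=(1+\lambda^3)^{-1/3}\begin{pmatrix}1&\lambda f&0\\0&1&\lambda g\\\lambda h&0&1\end{pmatrix}$ with $f,g,h\in\mathbb C$, $fgh=1$ (a fixed branch of the cube root being used throughout). Let $L_i\in{\cal M}$, $i=1,2,3,4$, with parameters $(f_i,g_i,h_i)$, satisfy $L_1L_2=L_3L_4$, and suppose that the off-diagonal parts of $L_1,L_2$ are componentwise distinct from the off-diagonal parts of $L_3,L_4$ respectively (i.e. $f_1\ne f_3$, $g_1\ne g_3$, $h_1\ne h_3$, $f_2\ne f_4$, $g_2\ne g_4$, $h_2\ne h_4$). Then there exists $L_0\in{\cal M}$ such that $L_0L_1L_2=L_0L_3L_4=I$. *)

(* Defs.v *)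
From HB Require Import structures.
From mathcomp Require Import all_boot all_order all_algebra.
From mathcomp Require Import complex reals.
Set Implicit Arguments. Unset Strict Implicit. Unset Printing Implicit Defensive.
Import Order.TTheory GRing.Theory Num.Theory.
Local Open Scope ring_scope.

Definition Mpart (C : ringType) (f g h l : C) : 'M[C]_3 :=
  \matrix_(i < 3, j < 3)
    if i == j then 1
    else if (i == 0 :> nat) && (j == 1 :> nat) then l * f
    else if (i == 1 :> nat) && (j == 2 :> nat) then l * g
    else if (i == 2 :> nat) && (j == 0 :> nat) then l * h
    else 0.

(* L(l) = (1 + l^3)^(-1/3) * Mpart, where the cube root is given by a fixed
   branch cbrt (any function with cbrt z ^+ 3 = z). *)
Definition Lmat (R : realType) (cbrt : R[i] -> R[i]) (f g h l : R[i]) : 'M[R[i]]_3 :=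
  (cbrt (1 + l ^+ 3))^-1 *: Mpart f g h l.

(* Main.v *)
Require Import Defs.
From HB Require Import structures.
From mathcomp Require Import all_boot all_order all_algebra.
From mathcomp Require Import complex reals ring.
Import Order.TTheory GRing.Theory Num.Theory.
Local Open Scope ring_scope.

Set Implicit Arguments. Unset Strict Implicit.
Lemma alg (F : fieldType) (f1 g1 h1 f2 g2 h2 f3 g3 h3 : F) :
  f1*g1*h1= 1 -> f3*g3*h3= 1 -> f1!=f3 -> g1!=g3 -> h1!=h3 ->
  f2*(h1-h3) = h3*(f1-f3) -> g2*(f1-f3)=f3*(g1-g3) -> h2*(g1-g3)=g3*(h1-h3) ->
  (f1+f2)*g1*h2 = -1 /\ (g1+g2)*h1*f2 = -1 /\ (h1+h2)*f1*g2 = -1 /\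
      f1*g2 = (f1+f2)*(g1+g2) /\ g1*h2 = (g1+g2)*(h1+h2) /\
      h1*f2 = (h1+h2)*(f1+f2) /\ (f1+f2)*(g1+g2)*(h1+h2) = -1.
Proof.
move=> p1 p3 nf ng nh d1 d2 d3.
have nz (a b c : F) : a*b*c = 1 -> a != 0 /\ b != 0 /\ c != 0.
  move=> e; have : a*b*c != 0 by rewrite e oner_neq0.
  by rewrite !mulf_eq0 !negb_or => /andP[/andP[-> ->] ->].
have [f10 [g10 h10]] := nz _ _ _ p1.
have [f30 [g30 h30]] := nz _ _ _ p3.
have nf' : f1 - f3 != 0 by rewrite subr_eq0.
have ng' : g1 - g3 != 0 by rewrite subr_eq0.
have nh' : h1 - h3 != 0 by rewrite subr_eq0.
have ef2 : f2 = h3*(f1-f3)/(h1-h3) by rewrite -d1 mulfK.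
have eg2 : g2 = f3*(g1-g3)/(f1-f3) by rewrite -d2 mulfK.
have eh2 : h2 = g3*(h1-h3)/(g1-g3) by rewrite -d3 mulfK.
have eh1 : h1 = (f1*g1)^-1 by rewrite -[LHS](mulKf (mulf_neq0 f10 g10)) p1 mulr1.
have eh3 : h3 = (f3*g3)^-1 by rewrite -[LHS](mulKf (mulf_neq0 f30 g30)) p3 mulr1.
rewrite ef2 eg2 eh2.
have nfg : f3*g3 + -1*(f1*g1) != 0.
  by rewrite mulN1r subr_eq0; apply: contra nh => /eqP E; rewrite eh1 eh3 E.
rewrite eh1 eh3.
do ![split]; field.
all: by rewrite ?nfg ?nf' ?ng' ?f10 ?g10 ?f30 ?g30.
Qed.
Definition Q (C : comNzRingType) (F G H a b c l : C) : 'M[C]_3 :=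
  \matrix_(i < 3, j < 3)
    if i == j then 1
    else if (i == 0 :> nat) && (j == 1 :> nat) then l * F
    else if (i == 0 :> nat) && (j == 2 :> nat) then l^+2 * a
    else if (i == 1 :> nat) && (j == 0 :> nat) then l^+2 * b
    else if (i == 1 :> nat) && (j == 2 :> nat) then l * G
    else if (i == 2 :> nat) && (j == 0 :> nat) then l * H
    else l^+2 * c.

Lemma MM (C : comNzRingType) (f1 g1 h1 f2 g2 h2 l : C) :
  Mpart f1 g1 h1 l *m Mpart f2 g2 h2 l =
  Q (f1+f2) (g1+g2) (h1+h2) (f1*g2) (g1*h2) (h1*f2) l.
Proof.
apply/matrixP => i j; rewrite !mxE !big_ord_recr big_ord0 /= !mxE.
case: i => [[|[|[|i]]] Hi] //; case: j => [[|[|[|j]]] Hj] //=; ring.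
Qed.

Lemma Q_eq (C : comNzRingType) (F G H a b c F' G' H' a' b' c' : C) :
  Q F G H a b c 1 = Q F' G' H' a' b' c' 1 ->
  [/\ F = F', G = G', H = H', a = a' & b = b'] /\ c = c'.
Proof.
move=> E; have e i j := congr1 (fun M : 'M_3 => M i j) E.
have := e (@Ordinal 3 0 isT) (@Ordinal 3 1 isT).
have := e (@Ordinal 3 1 isT) (@Ordinal 3 2 isT).
have := e (@Ordinal 3 2 isT) (@Ordinal 3 0 isT).
have := e (@Ordinal 3 0 isT) (@Ordinal 3 2 isT).
have := e (@Ordinal 3 1 isT) (@Ordinal 3 0 isT).
have := e (@Ordinal 3 2 isT) (@Ordinal 3 1 isT).
rewrite !mxE /= expr1n !mul1r.
by move=> -> -> -> -> -> ->.
Qed.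

Lemma MQ (C : comNzRingType) (F G H a b c l : C) :
  F * b = -1 -> G * c = -1 -> H * a = -1 -> a = F * G -> b = G * H -> c = H * F ->
  Mpart (-F) (-G) (-H) l *m Q F G H a b c l = (1 + l^+3)%:M.
Proof.
move=> e1 e2 e3 e4 e5 e6.
apply/matrixP => i j; rewrite !mxE !big_ord_recr big_ord0 /= !mxE.
case: i => [[|[|[|i]]] Hi] //; case: j => [[|[|[|j]]] Hj] //=.
- apply/eqP; rewrite -subr_eq0; apply/eqP.
  transitivity (- l^+3 * (F*b + 1)); first by ring.
  by rewrite e1 addNr mulr0.
- by ring.
- by rewrite e4; ring.
- by rewrite e5; ring.
- apply/eqP; rewrite -subr_eq0; apply/eqP.
  transitivity (- l^+3 * (G*c + 1)); first by ring.
  by rewrite e2 addNr mulr0.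
- by ring.
- by ring.
- by rewrite e6; ring.
- apply/eqP; rewrite -subr_eq0; apply/eqP.
  transitivity (- l^+3 * (H*a + 1)); first by ring.
  by rewrite e3 addNr mulr0.
Qed.
Theorem lemma29 (R : realType) (cbrt : R[i] -> R[i])
  (hcbrt : forall z : R[i], cbrt z ^+ 3 = z)
  (f1 g1 h1 f2 g2 h2 f3 g3 h3 f4 g4 h4 : R[i])
  (hM1 : f1 * g1 * h1 = 1) (hM2 : f2 * g2 * h2 = 1)
  (hM3 : f3 * g3 * h3 = 1) (hM4 : f4 * g4 * h4 = 1)
  (heq : forall l : R[i], 1 + l ^+ 3 != 0 ->
     Lmat cbrt f1 g1 h1 l *m Lmat cbrt f2 g2 h2 l
     = Lmat cbrt f3 g3 h3 l *m Lmat cbrt f4 g4 h4 l)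
  (hf13 : f1 != f3) (hg13 : g1 != g3) (hh13 : h1 != h3)
  (hf24 : f2 != f4) (hg24 : g2 != g4) (hh24 : h2 != h4) :
  exists f0 g0 h0 : R[i], f0 * g0 * h0 = 1 /\
    forall l : R[i], 1 + l ^+ 3 != 0 ->
      Lmat cbrt f0 g0 h0 l *m Lmat cbrt f1 g1 h1 l *m Lmat cbrt f2 g2 h2 l = 1%:M /\
      Lmat cbrt f0 g0 h0 l *m Lmat cbrt f3 g3 h3 l *m Lmat cbrt f4 g4 h4 l = 1%:M.
Proof.
have cnz l : 1 + l^+3 != 0 -> cbrt (1 + l^+3) != 0.
  by move=> hl; apply: contraNneq hl => e; rewrite -(hcbrt (1+l^+3)) e exprS mul0r.
have LL f g h f' g' h' l : Lmat cbrt f g h l *m Lmat cbrt f' g' h' l =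
    (cbrt (1 + l^+3))^-1 ^+ 2 *: Q (f+f') (g+g') (h+h') (f*g') (g*h') (h*f') l.
  by rewrite /Lmat -scalemxAl -scalemxAr scalerA MM expr2.
have two : (1 : R[i]) + 1 ^+ 3 != 0.
  by rewrite expr1n -[1 + 1]/(2%:R) pnatr_eq0.
have key l : 1 + l^+3 != 0 -> Q (f1+f2) (g1+g2) (h1+h2) (f1*g2) (g1*h2) (h1*f2) l =
    Q (f3+f4) (g3+g4) (h3+h4) (f3*g4) (g3*h4) (h3*f4) l.
  move=> hl; have := heq l hl; rewrite !LL; apply: scalerI.
  by rewrite expf_neq0 // invr_eq0 cnz.
have E := key 1 two.
have [[S1 S2 S3 P1 P2] P3] := Q_eq E.
have ef4 : f4 = f1+f2-f3 by rewrite S1; ring.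
have eg4 : g4 = g1+g2-g3 by rewrite S2; ring.
have eh4 : h4 = h1+h2-h3 by rewrite S3; ring.
have d1 : f2*(h1-h3) = h3*(f1-f3).
  apply/eqP; rewrite -subr_eq0; apply/eqP.
  have -> : f2*(h1-h3) - h3*(f1-f3) = h1*f2 - h3*f4 by rewrite ef4; ring.
  by rewrite P3 subrr.
have d2 : g2*(f1-f3) = f3*(g1-g3).
  apply/eqP; rewrite -subr_eq0; apply/eqP.
  have -> : g2*(f1-f3) - f3*(g1-g3) = f1*g2 - f3*g4 by rewrite eg4; ring.
  by rewrite P1 subrr.
have d3 : h2*(g1-g3) = g3*(h1-h3).
  apply/eqP; rewrite -subr_eq0; apply/eqP.
  have -> : h2*(g1-g3) - g3*(h1-h3) = g1*h2 - g3*h4 by rewrite eh4; ring.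
  by rewrite P2 subrr.
have [c1 [c2 [c3 [c4 [c5 [c6 c7]]]]]] := alg hM1 hM3 hf13 hg13 hh13 d1 d2 d3.
have e1 : (f1+f2) * (g1*h2) = -1 by rewrite mulrA.
have e2 : (g1+g2) * (h1*f2) = -1 by rewrite mulrA.
have e3 : (h1+h2) * (f1*g2) = -1 by rewrite mulrA.
exists (-(f1+f2)), (-(g1+g2)), (-(h1+h2)); split.
  by transitivity (- ((f1+f2)*(g1+g2)*(h1+h2))); [ring | rewrite c7 opprK].
move=> l hl.
have first : Lmat cbrt (-(f1+f2)) (-(g1+g2)) (-(h1+h2)) l *m Lmat cbrt f1 g1 h1 l
    *m Lmat cbrt f2 g2 h2 l = 1%:M.
  rewrite -mulmxA.
  rewrite [X in _ *m X](LL f1 g1 h1 f2 g2 h2 l).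
  rewrite {1}/Lmat -scalemxAl -scalemxAr scalerA (MQ l e1 e2 e3 c4 c5 c6).
  rewrite scale_scalar_mx; congr (_%:M).
  have hc := hcbrt (1+l^+3); have c0 := cnz l hl; move: hc c0.
  set c := cbrt _ => hc c0; rewrite -[X in _ * X]hc.
  by rewrite -exprS exprVn mulVf // expf_neq0.
split; first exact: first.
rewrite -[LHS]mulmxA.
rewrite -[X in _ *m X](heq l hl).
rewrite mulmxA.
exact: first.
Qed.
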